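(* Let $n\in\mathbb N$, let $\varphi\in\mathscr S_M(\mathbb R)$ be even and real-valued, and let $\varepsilon>0$. Then the map $T_\varepsilon:\mathscr P_n(\mathbb R)\to\mathscr P_n(\mathbb R)$, $T_\varepsilon(p)=p*\varphi_\varepsilon$, is a linear bijection (an automorphism of $\mathscr P_n(\mathbb R)$). Moreover, for $p\in\mathscr P_n(\mathbb R)$, with $p_0:=p$, $p_{j+1}:=T_\varepsilon(p_j)-p_j$ and $T_\varepsilon^0:=\mathrm{id}$: if $n$ is even, $$T_\varepsilon^{-1}(p)=\sum_{j=0}^{n/2}(-1)^jp_j=\sum_{j=0}^{n/2}\sum_{k=0}^{j}(-1)^{j+k}\binom{j}{k}T_\varepsilon^{\,j-k}(p)=\sum_{j=0}^{n/2}(-1)^{n/2-j}\binom{n/2+1}{j}T_\varepsilon^{\,n/2-j}(p);$$ if $n$ is odd, $$T_\varepsilon^{-1}(p)=\sum_{j=0}^{(n-1)/2}(-1)^jp_j=\sum_{j=0}^{(n-1)/2}(-1)^{\frac{n-1}{2}-j}\binom{\frac{n+1}{2}}{j}T_\varepsilon^{\,\frac{n-1}{2}-j}(p).$$ Here $T_\varepsilon^m$ denotes the $m$-fold composition of $T_\varepsilon$.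
   Context: $\mathscr S_M(\mathbb R)=\{f\in\mathscr S(\mathbb R): \int_{\mathbb R}f=1\}$, where $\mathscr S(\mathbb R)$ is the Schwartz space. $\varphi_\varepsilon(x):=\frac1\varepsilon\varphi(x/\varepsilon)$ for $\varepsilon>0$. $\mathscr P_n(\mathbb R)$ is the real vector space of real polynomials of degree at most $n$. Convolution: $(f*g)(x)=\int_{\mathbb R}f(x-y)g(y)\,dy$. *)

(* Defs.v *)
From HB Require Import structures.
From mathcomp Require Import all_boot all_order all_algebra.
From mathcomp Require Import all_classical all_reals all_analysis.
Set Implicit Arguments. Unset Strict Implicit. Unset Printing Implicit Defensive.
Import Order.TTheory GRing.Theory Num.Theory.
Local Open Scope ring_scope.
Local Open Scope classical_set_scope.

Section Defs.
Variable R : realType.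

Definition schwartz (f : R -> R) : Prop :=
  (forall (m : nat) (x : R), derivable (derive1n m f) x 1) /\
  (forall k m : nat, exists C : R, forall x : R,
      `|x| ^+ k * `|derive1n m f x| <= C).

Definition schwartzM (f : R -> R) : Prop :=
  schwartz f /\ (\int[@lebesgue_measure R]_x (f x)%:E = 1%:E)%E.

Definition even_fun (f : R -> R) : Prop := forall x, f (- x) = f x.

Definition dilate (phi : R -> R) (eps : R) : R -> R :=
  fun x => eps^-1 * phi (x / eps).

Definition conv (f g : R -> R) : R -> R :=
  fun x => Rintegral (@lebesgue_measure R) setT (fun y => f (x - y) * g y).

Definition Pn (n : nat) : set (R -> R) :=
  [set f | exists p : {poly R}, (size p <= n.+1)%N /\ f = (fun x => p.[x])].

Definition Teps (phi : R -> R) (eps : R) (f : R -> R) : R -> R :=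
  conv f (dilate phi eps).

Fixpoint pseq (T : (R -> R) -> (R -> R)) (p : R -> R) (j : nat) : R -> R :=
  match j with
  | 0 => p
  | j'.+1 => fun x => T (pseq T p j') x - pseq T p j' x
  end.

End Defs.

(* Main.v *)
Require Import Defs.
From HB Require Import structures.
From mathcomp Require Import all_boot all_order all_algebra.
From mathcomp Require Import all_classical all_reals all_analysis.
From mathcomp Require Import measurable_realfun.
From mathcomp Require Import ring lra zify.
Import Order.TTheory GRing.Theory Num.Theory numFieldNormedType.Exports.
Local Open Scope ring_scope.
Local Open Scope classical_set_scope.
Section S1.
Variable R : realType.
Local Notation mu := (@lebesgue_measure R).

Lemma oneDsqrV_int : mu.-integrable setT (EFin \o (fun y : R => (oneDsqr y)^-1)).
Proof.
have mf : measurable_fun setT (fun y : R => (oneDsqr y)^-1).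
  by apply: continuous_measurable_fun; exact: continuous_oneDsqrV.
apply/integrableP; split; first exact/measurable_EFinP.
have pos : forall y : R, 0 <= (oneDsqr y)^-1.
  by move=> y; rewrite invr_ge0 (le_trans _ (oneDsqr_ge1 y)).
under eq_integral do rewrite /= ger0_norm ?pos//.
have -> : [set: R] = `]-oo, 0[ `|` `[0, +oo[.
  apply/seteqP; split => x //= _; rewrite !in_itv /= !andbT.
  by case: (ltP x 0) => h; [left|right].
rewrite ge0_integral_setU//=; last 2 first.
- by apply/measurable_EFinP; exact: measurable_funTS.
- apply/disj_setPS => x [] /=; rewrite !in_itv/= andbT => h1 h2.
  by move: (lt_le_trans h1 h2); rewrite ltxx.
have h0 := @integral0y_oneDsqr R.
have hN : (\int[mu]_(x in `]-oo, 0%R]) (oneDsqr x)^-1%:E = (pi / 2)%:E)%E.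
  rewrite -h0 ge0_integration_by_substitution0//=.
  - by apply: eq_integral => x _; rewrite /oneDsqr sqrrN.
  - exact/measurable_EFinP.
apply: (@le_lt_trans _ _ ((pi / 2)%:E + (pi / 2)%:E)%E); last by rewrite -EFinD ltry.
apply: leeD; last by rewrite h0.
rewrite -hN; apply: ge0_subset_integral => //=.
- exact/measurable_EFinP/measurable_funTS.
- by move=> x /=; rewrite !in_itv/= => /ltW.
Qed.

End S1.

Section S2.
Variable R : realType.
Local Notation mu := (@lebesgue_measure R).
Variables (phi : R -> R) (eps : R).
Hypothesis hS : schwartzM phi.
Hypothesis hE : even_fun phi.
Hypothesis he : 0 < eps.
Local Notation phie := (dilate phi eps).

Lemma phi_cont : continuous phi.
Proof.
move=> x; apply: differentiable_continuous; apply/derivable1_diffP.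
exact: (hS.1.1 0%N x).
Qed.

Lemma phie_cont : continuous phie.
Proof.
move=> x; rewrite /dilate. apply: (@continuousM R R (fun=> eps^-1) (fun y => phi (y / eps))).
  exact: cvg_cst.
apply: (@continuous_comp R R R (fun y => y / eps) phi); last exact: phi_cont.
by apply: (@continuousM R R id (fun=> eps^-1)); [exact: cvg_id | exact: cvg_cst].
Qed.

Lemma phi_bound k : exists C, forall x, `|x| ^+ k * `|phi x| <= C.
Proof. exact: (hS.1.2 k 0%N). Qed.

Lemma mom_bound i : exists K, forall y : R,
  `|y ^+ i * phie y| <= K * (oneDsqr y)^-1.
Proof.
have [C1 h1] := phi_bound i.
have [C2 h2] := phi_bound i.+2.
exists (eps^-1 * eps ^+ i * C1 + eps^-1 * eps ^+ i.+2 * C2) => y.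
have o1 := oneDsqr_ge1 y.
have o0 : 0 < oneDsqr y by apply: lt_le_trans o1.
rewrite ler_pdivlMr // mulrC.
have [z ->] : exists z, y = eps * z.
  by exists (y / eps); rewrite mulrCA divff ?gt_eqF // mulr1.
have ie : 0 < eps^-1 by rewrite invr_gt0.
rewrite /dilate /oneDsqr [eps * z]mulrC mulfK ?gt_eqF // [z * eps]mulrC.
rewrite !(normrM, normrX) (gtr0_norm he) (gtr0_norm ie) exprMn.
have zz : `|z| ^+ 2 = z ^+ 2 by rewrite real_normK ?num_real.
have -> : (1 + eps ^+ 2 * z ^+ 2) * ((eps * `|z|) ^+ i * (eps^-1 * `|phi z|)) =
  eps^-1 * eps ^+ i * (`|z| ^+ i * `|phi z|) +
  eps^-1 * eps ^+ i.+2 * (`|z| ^+ i.+2 * `|phi z|).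
  have e2 : `|z| ^+ i.+2 = `|z| ^+ i * z ^+ 2 by rewrite -zz -exprD addn2.
  rewrite e2 exprMn !exprS; ring.
apply: lerD; apply: ler_wpM2l => //; by rewrite mulr_ge0 ?invr_ge0 ?exprn_ge0 ?ltW.
Qed.

Lemma mom_cont i : continuous (fun y : R => y ^+ i * phie y).
Proof.
move=> x; apply: (@continuousM R R (fun y => y ^+ i) phie).
  exact: exprn_continuous.
exact: phie_cont.
Qed.

Lemma mom_int i : mu.-integrable setT (EFin \o (fun y => y ^+ i * phie y)).
Proof.
have [K hK] := mom_bound i.
apply: (@le_integrable _ _ _ mu setT measurableT _ (EFin \o (fun y => K * (oneDsqr y)^-1))).
- by apply/measurable_EFinP; apply: continuous_measurable_fun; exact: mom_cont.
- move=> y _ /=; rewrite lee_fin; apply: le_trans (hK y) _; exact: ler_norm.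
- have := integrableZl measurableT K (oneDsqrV_int R).
  by apply: eq_integrable => // y _.
Qed.

End S2.
Section S3.
Variable R : realType.
Local Notation mu := (@lebesgue_measure R).
Variables (eps : R).
Hypothesis he : 0 < eps.

Lemma push_scale A : measurable A ->
  pushforward mu (fun y : R => y / eps) A = (eps%:E * mu A)%E.
Proof.
have ie : 0 <= eps^-1 by rewrite invr_ge0 ltW.
have ms : measurable_fun setT (fun y : R => y / eps).
  apply: continuous_measurable_fun => x.
  by apply: (@continuousM R R id (fun=> eps^-1)); [exact: cvg_id | exact: cvg_cst].
move=> mA.
have key : mu A = mscale (NngNum ie) (pushforward mu ((fun y : R => y / eps) : _ -> measurableTypeR R)) A.
  move=> m; apply: lebesgue_measure_unique => // X [[a b]] _ <-.
  rewrite /= /mscale /pushforward /=.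
  rewrite [X in (_ * mu X)%E](_ : _ = `]a * eps, b * eps]%classic); last first.
    by apply/seteqP; split => y /=; rewrite !in_itv /= ltr_pdivlMr // ler_pdivrMr.
  rewrite !lebesgue_measure_itv /= !lte_fin ltr_pM2r //.
  case: ifP => _; last by rewrite mule0.
  by rewrite -EFinB -EFinM; congr EFin; field; rewrite gt_eqF.
rewrite (key ms) /= /mscale muleA -EFinM mulfV ?gt_eqF // mul1e.
reflexivity.
Qed.

End S3.

Section S4.
Variable R : realType.
Local Notation mu := (@lebesgue_measure R).
Variables (phi : R -> R) (eps : R).
Hypothesis hS : schwartzM phi.
Hypothesis hE : even_fun phi.
Hypothesis he : 0 < eps.
Local Notation phie := (dilate phi eps).

Lemma phi_int : mu.-integrable setT (EFin \o phi).
Proof.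
have := @mom_int R phi 1 hS ltr01 0.
by apply: eq_integrable => // y _ /=; rewrite /dilate invr1 mulr1 expr0 !mul1r.
Qed.

Lemma phis_int : mu.-integrable setT (EFin \o (fun y => phi (y / eps))).
Proof.
have := integrableZl measurableT eps (@mom_int R phi eps hS he 0).
apply: eq_integrable => // y _ /=; rewrite /dilate expr0 mul1r -EFinM.
by rewrite mulrA mulfV ?gt_eqF // mul1r.
Qed.

Lemma M0 : \int[mu]_y (y ^+ 0 * phie y) = 1.
Proof.
rewrite /Rintegral.
have e1 : (\int[mu]_y ((y ^+ 0 * phie y)%:E) =
     (eps^-1)%:E * \int[mu]_y (phi (y / eps))%:E)%E.
  rewrite -integralZl //; last exact: phis_int.
  by apply: eq_integral => y _; rewrite /dilate expr0 mul1r EFinM.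
rewrite e1.
have ms : measurable_fun setT (fun y : R => y / eps).
  apply: continuous_measurable_fun => x.
  by apply: (@continuousM R R id (fun=> eps^-1)); [exact: cvg_id | exact: cvg_cst].
have mF : measurable_fun setT (EFin \o phi).
  by apply/measurable_EFinP; apply: continuous_measurable_fun; exact: phi_cont.
have := @integral_pushforward _ _ (measurableTypeR R) (measurableTypeR R) R (fun y : R => y / eps) ms mu setT (EFin \o phi) mF.
rewrite preimage_setT => /(_ phis_int measurableT) /= <-.
have he' : 0 <= eps by exact: ltW.
rewrite (eq_measure_integral (mscale (NngNum he') mu)); last first.
  by move=> A mA _ /=; have := @push_scale R eps he A mA; rewrite /pushforward /mscale /= => ->.
have /integrableP [_ fin] := phi_int.
rewrite integralE !ge0_integral_mscale //=.
rewrite -muleBr //; last first.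
  by rewrite fin_num_adde_defl // fin_numN integrable_neg_fin_num //; exact: phi_int.
rewrite -integralE.
have -> : (\int[mu]_x (phi x)%:E = 1%:E)%E by exact: hS.2.
by rewrite mule1 -EFinM mulVf ?gt_eqF.
all: try done.
- exact: measurable_funeneg.
- exact: measurable_funepos.
Qed.
Lemma M1 : \int[mu]_y (y ^+ 1 * phie y) = 0.
Proof.
set g := fun y : R => y ^+ 1 * phie y.
have gN y : g (- y) = -1 * g y.
  by rewrite /g /dilate [- y / eps]mulNr hE !expr1; ring.
have mg : measurable_fun setT (EFin \o g).
  by apply/measurable_EFinP; apply: continuous_measurable_fun; exact: mom_cont.
have mN : measurable_fun setT (-%R : R -> R).
  by apply: continuous_measurable_fun; exact: opp_continuous.
have e : (\int[mu]_x (g x)%:E = \int[mu]_x (g (- x))%:E)%E.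
  rewrite (eq_measure_integral (pushforward mu (-%R : _ -> measurableTypeR R))); last first.
    by move=> A mA _; have := lebesgue_measureN mA; rewrite /pushforward => h; exact: (esym h).
  have intf : mu.-integrable ((-%R) @^-1` setT) ((EFin \o g) \o (-%R)).
    rewrite preimage_setT.
    have := integrableZl measurableT (-1) (@mom_int R phi eps hS he 1).
    by apply: eq_integrable => // y _ /=; rewrite -EFinM gN.
  have := @integral_pushforward _ _ (measurableTypeR R) (measurableTypeR R) R (-%R) mN mu setT (EFin \o g) mg intf measurableT.
  by rewrite preimage_setT => h; exact: h.
have : \int[mu]_y g y = - \int[mu]_y g y.
  rewrite {1}/Rintegral e.
  under eq_integral do rewrite gN.
  by rewrite -/(Rintegral _ _ _) RintegralZl //= ?mulN1r //; exact: (@mom_int R phi eps hS he 1).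
rewrite -/g; lra.
Qed.

End S4.

Section S5.
Variable R : realType.
Local Notation mu := (@lebesgue_measure R).

Lemma Rintegral_sum (I : Type) (s : seq I) (f : I -> R -> R) :
  (forall i, mu.-integrable setT (EFin \o f i)) ->
  \int[mu]_x (\sum_(i <- s) f i x) = \sum_(i <- s) \int[mu]_x f i x.
Proof.
move=> hf; elim: s => [|a s IH].
  under eq_Rintegral do rewrite big_nil.
  by rewrite big_nil /Rintegral integral0.
under eq_Rintegral do rewrite big_cons.
rewrite RintegralD //; first by rewrite IH big_cons.
have := @integrable_sum _ _ R mu setT measurableT I s xpredT (fun i => EFin \o f i) (fun i _ => hf i).
by apply: eq_integrable => // x _ /=; rewrite sumEFin.
Qed.

Variables (phi : R -> R) (eps : R).
Hypothesis hS : schwartzM phi.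
Hypothesis hE : even_fun phi.
Hypothesis he : 0 < eps.
Local Notation phie := (dilate phi eps).

Definition Mom i := \int[mu]_y (y ^+ i * phie y).
Definition TP (N : nat) (r : {poly R}) : {poly R} :=
  \sum_(i < N) ((-1) ^+ i * Mom i) *: r^`N(i).

Lemma T_horner N (r : {poly R}) : (size r <= N)%N ->
  Teps phi eps (fun x => r.[x]) = (fun x => (TP N r).[x]).
Proof.
move=> hN; apply/funext => x.
rewrite /Teps /Defs.conv /TP horner_sum.
have e y : r.[x - y] * phie y =
    \sum_(i < N) (r^`N(i).[x] * (-1) ^+ i) * (y ^+ i * phie y).
  rewrite (nderiv_taylor_wide (mulrC x (- y)) hN) big_distrl /=; apply: eq_bigr => i _.
  rewrite [(- y) ^+ i]exprNn; ring.
under eq_Rintegral do rewrite e.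
rewrite Rintegral_sum; last first.
  move=> i; have := integrableZl measurableT (r^`N(i).[x] * (-1) ^+ i) (@mom_int R phi eps hS he i).
  by apply: eq_integrable => // y _ /=; rewrite EFinM.
apply: eq_bigr => i _; rewrite RintegralZl //; last exact: (@mom_int R phi eps hS he i).
by rewrite hornerZ /Mom; ring.
Qed.

End S5.
Section Alg.
Variable (K : fieldType) (TPf : {poly K} -> {poly K}).
Hypothesis TPlin : forall a p q, TPf (a *: p + q) = a *: TPf p + TPf q.
Hypothesis TPsz : forall r, (size (TPf r - r)%R <= size r - 2)%N.
Implicit Types (b f g p q r : {poly K}).

Lemma TP0 : TPf 0 = 0.
Proof.
have := TPlin 1 0 0; rewrite !scale1r addr0 => h.
by apply: (@addrI _ (TPf 0)); rewrite addr0 -h.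
Qed.

Lemma TPD p q : TPf (p + q) = TPf p + TPf q.
Proof. by have := TPlin 1 p q; rewrite !scale1r. Qed.

Lemma TPZ a p : TPf (a *: p) = a *: TPf p.
Proof. by rewrite -[a *: p]addr0 TPlin TP0 addr0. Qed.

Lemma TPsum (I : Type) (s : seq I) (F : I -> {poly K}) :
  TPf (\sum_(i <- s) F i) = \sum_(i <- s) TPf (F i).
Proof.
elim: s => [|a s IH]; first by rewrite !big_nil TP0.
by rewrite !big_cons TPD IH.
Qed.

Lemma size_TP r : (size (TPf r) <= size r)%N.
Proof.
rewrite -[TPf r](subrK r); apply: (leq_trans (size_polyD _ _)).
by rewrite geq_max leqnn andbT (leq_trans (TPsz r)) // leq_subr.
Qed.

Lemma size_iter k r : (size (iter k TPf r) <= size r)%N.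
Proof.
elim: k => [|k IH] //=; exact: leq_trans (size_TP _) IH.
Qed.

Definition ev (b g : {poly K}) : {poly K} :=
  \sum_(i < size g) g`_i *: iter i TPf b.

Lemma ev_wide b g k : (size g <= k)%N ->
  ev b g = \sum_(i < k) g`_i *: iter i TPf b.
Proof.
move=> hk; rewrite /ev (big_ord_widen k (fun i => g`_i *: iter i TPf b)) //.
rewrite big_mkcond; apply: eq_bigr => i _; case: ltnP => // hi.
by rewrite nth_default // scale0r.
Qed.

Lemma ev0 b : ev b 0 = 0.
Proof. by rewrite /ev size_poly0 big_ord0. Qed.

Lemma evD b f g : ev b (f + g) = ev b f + ev b g.
Proof.
set k := maxn (size f) (size g).
rewrite (@ev_wide b (f + g) k); last exact: size_polyD.
rewrite (@ev_wide b f k) ?leq_maxl // (@ev_wide b g k) ?leq_maxr //.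
by rewrite -big_split; apply: eq_bigr => i _; rewrite coefD scalerDl.
Qed.

Lemma evZ b a f : ev b (a *: f) = a *: ev b f.
Proof.
rewrite (@ev_wide b (a *: f) (size f)); last exact: size_scale_leq.
by rewrite /ev scaler_sumr; apply: eq_bigr => i _; rewrite coefZ scalerA.
Qed.

Lemma evN b f : ev b (- f) = - ev b f.
Proof. by rewrite -scaleN1r evZ scaleN1r. Qed.

Lemma evB b f g : ev b (f - g) = ev b f - ev b g.
Proof. by rewrite evD evN. Qed.

Lemma ev_sum b (I : Type) (s : seq I) (F : I -> {poly K}) :
  ev b (\sum_(i <- s) F i) = \sum_(i <- s) ev b (F i).
Proof.
elim: s => [|a s IH]; first by rewrite !big_nil ev0.
by rewrite !big_cons evD IH.
Qed.

Lemma ev1 b : ev b 1 = b.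
Proof. by rewrite /ev size_poly1 big_ord1 coefC /= scale1r. Qed.

Lemma evX_aux b g : ev b ('X * g) = \sum_(i < size g) g`_i *: iter i.+1 TPf b.
Proof.
rewrite (@ev_wide b ('X * g) (size g).+1); last first.
  have [->|g0] := eqVneq g 0; first by rewrite mulr0 size_poly0.
  by rewrite mulrC size_mulX.
by rewrite big_ord_recl coefXM /= scale0r add0r; apply: eq_bigr => i _; rewrite coefXM.
Qed.

Lemma evX b g : ev b ('X * g) = TPf (ev b g).
Proof.
by rewrite evX_aux /ev TPsum; apply: eq_bigr => i _; rewrite TPZ.
Qed.

Lemma ev_TP b g : ev (TPf b) g = ev b ('X * g).
Proof. by rewrite evX_aux /ev; apply: eq_bigr => i _; rewrite iterSr. Qed.

Lemma evXn b k : ev b ('X ^+ k) = iter k TPf b.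
Proof.
elim: k => [|k IH]; first by rewrite expr0 ev1.
by rewrite exprS evX IH.
Qed.

Lemma size_ev b g : (size (ev b g) <= size b)%N.
Proof.
rewrite /ev; apply: (leq_trans (size_sum _ _ _)).
apply/bigmax_leqP => i _.
exact: leq_trans (size_scale_leq _ _) (size_iter _ _).
Qed.

Lemma evXB1 b g : ev b (('X - 1) * g) = TPf (ev b g) - ev b g.
Proof. by rewrite mulrBl mul1r evB evX. Qed.

Lemma size_nil b k : (size (ev b (('X - 1) ^+ k)%R) <= size b - k.*2)%N.
Proof.
elim: k => [|k IH]; first by rewrite expr0 ev1 subn0.
rewrite exprS evXB1; apply: (leq_trans (TPsz _)).
rewrite doubleS; move: IH; lia.
Qed.

Lemma nil_ev b k : (size b <= k.*2)%N -> ev b (('X - 1) ^+ k) = 0.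
Proof.
move=> h; apply/eqP; rewrite -size_poly_leq0.
by apply: (leq_trans (size_nil b k)); move: h; lia.
Qed.

Lemma tele k : 'X * \sum_(j < k) (1 - 'X) ^+ j = 1 - (1 - 'X) ^+ k :> {poly K}.
Proof.
elim: k => [|k IH]; first by rewrite big_ord0 mulr0 expr0 subrr.
by rewrite big_ord_recr /= mulrDr IH exprSr; ring.
Qed.

Lemma signB j : (-1) ^+ j *: ('X - 1) ^+ j = (1 - 'X) ^+ j :> {poly K}.
Proof.
elim: j => [|j IH]; first by rewrite !expr0 scale1r.
by rewrite !exprS -scalerA scalerAr scalerAl scaleN1r opprB IH.
Qed.

Lemma inv_ev b m : (size b <= m.+1.*2)%N ->
  ev (TPf b) (\sum_(j < m.+1) (-1) ^+ j *: ('X - 1) ^+ j) = b.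
Proof.
move=> h; rewrite ev_TP.
under eq_bigr do rewrite signB.
by rewrite tele evB ev1 -signB evZ nil_ev // scaler0 subr0.
Qed.

Lemma surj_ev b m : (size b <= m.+1.*2)%N ->
  TPf (ev b (\sum_(j < m.+1) (-1) ^+ j *: ('X - 1) ^+ j)) = b.
Proof. by move=> h; rewrite -evX -ev_TP inv_ev. Qed.

Lemma binom2 j : (-1) ^+ j *: ('X - 1) ^+ j =
  \sum_(k < j.+1) ((-1) ^+ (j + k) * ('C(j, k))%:R) *: 'X^(j - k) :> {poly K}.
Proof.
rewrite exprBn scaler_sumr; apply: eq_bigr => k _.
rewrite expr1n mulr1 -mulr_natr -!mul_polyC !rmorphM !rmorphXn /= rmorphN1 rmorph_nat exprD.
ring.
Qed.

Lemma binom3 m : \sum_(j < m.+1) (1 - 'X) ^+ j =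
  \sum_(j < m.+1) ((-1) ^+ (m - j) * ('C(m.+1, j))%:R) *: 'X^(m - j) :> {poly K}.
Proof.
apply: (@mulfI _ 'X); first by rewrite polyX_eq0.
rewrite tele mulr_sumr (reindex_inj rev_ord_inj) /=.
rewrite [1 - 'X]addrC exprD1n big_ord_recl /= expr0 bin0 mulr1n opprD addrA subrr add0r -sumrN.
apply: eq_bigr => i _; rewrite /bump /= add1n subSS.
have hi : (i <= m)%N by rewrite -ltnS.
have -> : (m - (m - i) = i)%N by rewrite subKn.
have -> : 'C(m.+1, m - i) = 'C(m.+1, i.+1).
  by rewrite -subSS bin_sub.
rewrite -mulr_natr -!mul_polyC !rmorphM !rmorphXn /= rmorphN1 rmorph_nat.
rewrite exprNn !exprS; ring.
Qed.

End Alg.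


Section S6.
Variable R : realType.
Variables (n : nat) (phi : R -> R) (eps : R).
Hypothesis hS : schwartzM phi.
Hypothesis hE : even_fun phi.
Hypothesis he : 0 < eps.
Local Notation T := (Teps phi eps).
Local Notation TPf := (TP R phi eps n.+3).

Lemma TPlinR a (p q : {poly R}) : TPf (a *: p + q) = a *: TPf p + TPf q.
Proof.
rewrite /TP scaler_sumr -big_split; apply: eq_bigr => i _.
by rewrite nderivnD nderivnZ scalerDr !scalerA mulrC.
Qed.

Lemma TPszR (r : {poly R}) : (size (TPf r - r)%R <= size r - 2)%N.
Proof.
rewrite /TP big_ord_recl big_ord_recl /= expr0 mul1r expr1 /Mom M0 // M1 // mulr0 scale0r.
rewrite scale1r nderivn0 add0r addrC addKr.
apply: (leq_trans (size_sum _ _ _)); apply/bigmax_leqP => i _.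
apply: (leq_trans (size_scale_leq _ _)); rewrite /nderivn.
apply: (leq_trans (size_poly _ _)); rewrite /bump /=; lia.
Qed.

Local Notation evp := (ev R TPf).

Lemma T_h (r : {poly R}) : (size r <= n.+1)%N -> T (fun x => r.[x]) = (fun x => (TPf r).[x]).
Proof. by move=> h; apply: T_horner => //; lia. Qed.

Lemma size_evp b g : (size (evp b g) <= size b)%N.
Proof. exact: (@size_ev R TPf TPszR b g). Qed.

Lemma size_TPf b : (size (TPf b) <= size b)%N.
Proof. exact: (@size_TP R TPf TPszR b). Qed.

Lemma pseq_ev (b : {poly R}) j : (size b <= n.+1)%N ->
  pseq T (fun x => b.[x]) j = (fun x => (evp b (('X - 1) ^+ j)).[x]).
Proof.
move=> hb; elim: j => [|j IH] /=.
  by rewrite expr0 ev1.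
rewrite IH T_h; last exact: leq_trans (size_evp _ _) hb.
by apply/funext => x; rewrite exprS (@evXB1 R TPf TPlinR) hornerD hornerN.
Qed.

Lemma iter_ev (b : {poly R}) k : (size b <= n.+1)%N ->
  iter k T (fun x => b.[x]) = (fun x => (evp b ('X ^+ k)).[x]).
Proof.
move=> hb; rewrite (@evXn R TPf TPlinR); elim: k => [|k IH] //=.
rewrite IH T_h //; exact: leq_trans (@size_iter R TPf TPszR _ _) hb.
Qed.

Lemma Qform m (q0 : {poly R}) : (size q0 <= n.+1)%N -> (n.+1 <= m.+1.*2)%N ->
  (fun x => q0.[x]) = (fun x => \sum_(0 <= j < m.+1) (-1) ^+ j * pseq T (T (fun x => q0.[x])) j x).
Proof.
move=> hq hm; apply/funext => x; rewrite big_mkord.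
rewrite -{1}(@inv_ev R TPf TPlinR TPszR q0 m); last exact: leq_trans hq hm.
rewrite ev_sum horner_sum; apply: eq_bigr => j _.
rewrite evZ hornerZ T_h // pseq_ev //; exact: leq_trans (size_TPf _) hq.
Qed.

Lemma F2 m (p0 : {poly R}) : (size p0 <= n.+1)%N ->
  (fun x => \sum_(0 <= j < m.+1) (-1) ^+ j * pseq T (fun x => p0.[x]) j x) =
  (fun x => \sum_(0 <= j < m.+1) \sum_(0 <= k < j.+1)
     (-1) ^+ (j + k) * ('C(j, k))%:R * iter (j - k) T (fun x => p0.[x]) x).
Proof.
move=> hp; apply/funext => x; rewrite !big_mkord; apply: eq_bigr => j _.
rewrite big_mkord pseq_ev // -hornerZ -evZ binom2 ev_sum horner_sum.
by apply: eq_bigr => k _; rewrite evZ hornerZ iter_ev.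
Qed.

Lemma F3 m (p0 : {poly R}) : (size p0 <= n.+1)%N ->
  (fun x => \sum_(0 <= j < m.+1) (-1) ^+ j * pseq T (fun x => p0.[x]) j x) =
  (fun x => \sum_(0 <= j < m.+1)
     (-1) ^+ (m - j) * ('C(m.+1, j))%:R * iter (m - j) T (fun x => p0.[x]) x).
Proof.
move=> hp; apply/funext => x; rewrite !big_mkord.
transitivity (evp p0 (\sum_(j < m.+1) (1 - 'X) ^+ j)).[x].
  rewrite ev_sum horner_sum; apply: eq_bigr => j _.
  by rewrite -signB evZ hornerZ pseq_ev.
rewrite binom3 ev_sum horner_sum; apply: eq_bigr => j _.
by rewrite evZ hornerZ iter_ev.
Qed.

End S6.
Theorem mainTheorem5 (R : realType) (n : nat) (phi : R -> R) (eps : R) :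
  schwartzM phi -> even_fun phi -> 0 < eps ->
  let T := Teps phi eps in
  (* T is a linear bijection of P_n(R) onto itself *)
  set_bij (Pn n) (Pn n) T /\
  (forall (a : R) (f g : R -> R), Pn n f -> Pn n g ->
     T (fun x => a * f x + g x) = (fun x => a * T f x + T g x)) /\
  (* formulas for the inverse: q = T^-1(p) *)
  (forall p q : R -> R, Pn n p -> Pn n q -> T q = p ->
     (~~ odd n ->
        (q = (fun x => \sum_(0 <= j < (n %/ 2).+1) (-1) ^+ j * pseq T p j x)) /\
        ((fun x => \sum_(0 <= j < (n %/ 2).+1) (-1) ^+ j * pseq T p j x) =
         (fun x => \sum_(0 <= j < (n %/ 2).+1) \sum_(0 <= k < j.+1)
                     (-1) ^+ (j + k) * ('C(j, k))%:R * iter (j - k) T p x)) /\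
        ((fun x => \sum_(0 <= j < (n %/ 2).+1) \sum_(0 <= k < j.+1)
                     (-1) ^+ (j + k) * ('C(j, k))%:R * iter (j - k) T p x) =
         (fun x => \sum_(0 <= j < (n %/ 2).+1)
                     (-1) ^+ (n %/ 2 - j) * ('C((n %/ 2).+1, j))%:R
                       * iter (n %/ 2 - j) T p x))) /\
     (odd n ->
        (q = (fun x => \sum_(0 <= j < (n.-1 %/ 2).+1) (-1) ^+ j * pseq T p j x)) /\
        ((fun x => \sum_(0 <= j < (n.-1 %/ 2).+1) (-1) ^+ j * pseq T p j x) =
         (fun x => \sum_(0 <= j < (n.-1 %/ 2).+1)
                     (-1) ^+ (n.-1 %/ 2 - j) * ('C(n.+1 %/ 2, j))%:R
                       * iter (n.-1 %/ 2 - j) T p x)))).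
Proof.
move=> hS hE he T; rewrite {}/T.
set TPf := TP R phi eps n.+3.
have Tsz := @TPszR R n phi eps hS hE he.
have Tln := @TPlinR R n phi eps.
split; [|split].
- split.
  + move=> f [p [hp ->]]; exists (TPf p); split.
      exact: leq_trans (@size_TPf R n phi eps hS hE he p) hp.
    exact: T_h.
  + move=> f g /set_mem [p [hp ->]] /set_mem [q [hq ->]] e.
    have hm : (n.+1 <= n.+1.*2)%N by lia.
    by rewrite (@Qform R n phi eps hS hE he n p hp hm) (@Qform R n phi eps hS hE he n q hq hm) e.
  + move=> p [p0 [hp ->]].
    pose S := \sum_(j < n.+1) (-1) ^+ j *: ('X - 1) ^+ j : {poly R}.
    exists (fun x => (ev R TPf p0 S).[x]).
      exists (ev R TPf p0 S); split => //.
      exact: leq_trans (@size_evp R n phi eps hS hE he _ _) hp.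
    rewrite (@T_h R n phi eps hS he) //; last exact: leq_trans (@size_evp R n phi eps hS hE he _ _) hp.
    rewrite -/TPf /S (@surj_ev R TPf Tln Tsz p0 n) //.
    by apply: leq_trans hp _; rewrite -addnn leq_addr.
- move=> a f g [p [hp ->]] [q [hq ->]].
  have hs : (size (a *: p + q)%R <= n.+1)%N.
    apply: leq_trans (size_polyD _ _) _; rewrite geq_max hq andbT.
    exact: leq_trans (size_scale_leq _ _) hp.
  have -> : (fun x => a * p.[x] + q.[x]) = (fun x => (a *: p + q).[x]).
    by apply/funext => x; rewrite hornerD hornerZ.
  rewrite !(@T_h R n phi eps hS he) // Tln; apply/funext => x.
  by rewrite hornerD hornerZ.
- move=> p q [p0 [hp ep]] [q0 [hq eqq]] Tq.
  split => hodd.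
  + have hm : (n.+1 <= (n %/ 2).+1.*2)%N by lia.
    split; first by rewrite -Tq eqq; exact: (@Qform R n phi eps hS hE he _ q0 hq hm).
    rewrite ep; split; first exact: F2.
    by rewrite -(@F2 R n phi eps hS hE he _ p0 hp) (@F3 R n phi eps hS hE he _ p0 hp).
  + have hm : (n.+1 <= (n.-1 %/ 2).+1.*2)%N by lia.
    split; first by rewrite -Tq eqq; exact: (@Qform R n phi eps hS hE he _ q0 hq hm).
    have -> : (n.+1 %/ 2 = (n.-1 %/ 2).+1)%N.
      move: (odd_double_half n); rewrite hodd; lia.
    by rewrite ep (@F3 R n phi eps hS hE he _ p0 hp).
Qed.
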